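(* Let $\psi_u\in(0,2\pi)$ satisfy $t\mu\notin\mathbb Z$, where $t=\frac34-\frac{\psi_u}{2\pi}$, and let $\psi_{\tilde u}\in\mathbb R$ be arbitrary. Then $$Y_{\tilde u}=\frac{\zeta_{\tilde u}\sin^2\!\big(\psi_{\tilde u}-\frac{\pi}{\mu}+\frac{2\pi}{\mu}\lceil t\mu\rceil\big)}{V^2},\qquad V=\frac{\sin(\pi/\mu)}{W}.$$
   Context: Setup: Let $W\ge 1$ be an integer and $\mu\ge 2$ an even integer, and set $K=\mu W+1$. Let $\zeta_u>0$, $\psi_u\in(0,2\pi)$, and for $k=1,\dots,K$ let $h_{u,k}=\zeta_u^{1/2}e^{j(\psi_u+2\pi(k-1)/\mu)}$, where $j=\sqrt{-1}$. Let $\mathcal K_1=\{k\in\{2,\dots,K\}:\operatorname{Re}(h_{u,k})>0\}$. For an interfering user $\tilde u$ with $\zeta_{\tilde u}>0$ and phase $\psi_{\tilde u}$, let $h_{\tilde u,k}=\zeta_{\tilde u}^{1/2}e^{j(\psi_{\tilde u}+2\pi(k-1)/\mu)}$ and $Y_{\tilde u}=\big(\sum_{k\in\mathcal K_1}\operatorname{Re}(h_{\tilde u,k})\big)^2$. *)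

(* Defs.v *)
From mathcomp Require Import all_boot all_order all_algebra.
From mathcomp Require Import all_classical all_reals all_analysis.
Set Implicit Arguments. Unset Strict Implicit. Unset Printing Implicit Defensive.
Import Order.TTheory GRing.Theory Num.Theory.
Local Open Scope ring_scope.

(* Real part of h_{.,k} = zeta^{1/2} e^{j(psi + 2 pi (k-1)/mu)},
   i.e. zeta^{1/2} cos(psi + 2 pi (k-1)/mu). *)
Definition Reh (R : realType) (mu : nat) (zeta psi : R) (k : nat) : R :=
  Num.sqrt zeta * cos (psi + 2 * pi * (k.-1)%:R / mu%:R).

Definition Kdim (mu W : nat) : nat := (mu * W + 1)%N.

Definition inK1 (R : realType) (mu W : nat) (zeta_u psi_u : R) (k : nat) : bool :=
  (2 <= k <= Kdim mu W)%N && (0 < Reh mu zeta_u psi_u k).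

Definition Ytil (R : realType) (mu W : nat) (zeta_u psi_u zeta_t psi_t : R) : R :=
  (\sum_(0 <= k < (Kdim mu W).+1 | inK1 mu W zeta_u psi_u k) Reh mu zeta_t psi_t k) ^+ 2.

(* Main.v *)
Require Import Defs.
From mathcomp Require Import all_boot all_order all_algebra.
From mathcomp Require Import all_classical all_reals all_analysis.
From mathcomp Require Import ring lra zify.
Import Order.TTheory GRing.Theory Num.Theory.
Local Open Scope ring_scope.

Lemma shift_sum (R : realType) (h : nat -> R) p :
  (forall m, h (m + p)%N = h m) ->
  forall s, \sum_(0 <= i < p) h (i + s)%N = \sum_(0 <= i < p) h i.
Proof.
move=> hp; elim=> [|s IH]; first by apply: eq_big_nat => i _; rewrite addn0.
rewrite -IH.
have E1 := big_nat_recl p 0 (fun i => h (i + s)%N) (leq0n p).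
have E2 := big_nat_recr p 0 (fun i => h (i + s)%N) (leq0n p).
have E3 : \sum_(0 <= i < p) h (i.+1 + s)%N = \sum_(0 <= i < p) h (i + s.+1)%N.
  by apply: eq_big_nat => i _; rewrite addSnnS.
rewrite -E3.
have : h (0 + s)%N + \sum_(0 <= i < p) h (i.+1 + s)%N =
       \sum_(0 <= i < p) h (i + s)%N + h (p + s)%N by rewrite -E1 E2.
rewrite add0n addnC hp => H; apply: (addrI (h s)); rewrite H addrC //.
Qed.

Lemma block_sum (R : realType) (h : nat -> R) p W :
  (forall m, h (m + p)%N = h m) ->
  forall s, \sum_(0 <= i < p * W) h (i + s)%N = W%:R * \sum_(0 <= i < p) h i.
Proof.
move=> hp s; elim: W => [|W IH]; first by rewrite muln0 big_geq // mul0r.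
rewrite (big_cat_nat _ (n := p * W)) //=; last by rewrite leq_mul2l leqnSn orbT.
rewrite IH mulnS [(p + _)%N]addnC -{1}(add0n (p * W)%N) big_addn addKn.
under eq_big_nat => i _ do rewrite -addnA.
by rewrite shift_sum // -addn1 natrD mulrDl mul1r.
Qed.

Lemma telescope (R : realType) (phi d : R) n :
  2 * sin (d / 2) * \sum_(0 <= j < n) cos (phi + j%:R * d) =
  sin (phi + n%:R * d - d / 2) - sin (phi - d / 2).
Proof.
elim: n => [|n IH]; first by rewrite big_geq // mulr0 mul0r addr0 subrr.
rewrite big_nat_recr //= mulrDr IH.
have -> : phi + n.+1%:R * d - d / 2 = (phi + n%:R * d) + d / 2.
  by rewrite -addn1 natrD; field.
rewrite (sinD (phi + n%:R * d) (d / 2)) (sinB (phi + n%:R * d) (d / 2)); ring.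
Qed.

Lemma aux_xd (R : realType) (p q nn : R) : p != 0 -> nn != 0 ->
  (3 / 4 - q / (2 * p)) * (2 * nn) * (p / nn) = 3 * p / 2 - q.
Proof. by move=> hp hn; field; rewrite hp hn. Qed.

Lemma aux_ang (R : realType) (p m nn : R) : nn != 0 ->
  2 * p * m / (2 * nn) = m * (p / nn).
Proof. by move=> hn; field; rewrite hn. Qed.

Lemma aux_half (R : realType) (p nn : R) : nn != 0 ->
  p / (2 * nn) = (p / nn) / 2.
Proof. by move=> hn; field; rewrite hn. Qed.

Lemma aux_two (R : realType) (p nn : R) : nn != 0 ->
  2 * p / (2 * nn) = p / nn.
Proof. by move=> hn; field; rewrite hn. Qed.

Theorem theorem3 (R : realType) (W mu : nat) (zeta_u psi_u zeta_t psi_t : R) :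
  (1 <= W)%N -> (2 <= mu)%N -> ~~ odd mu ->
  0 < zeta_u -> 0 < psi_u < 2 * pi -> 0 < zeta_t ->
  (forall z : int, (3 / 4 - psi_u / (2 * pi)) * mu%:R != z%:~R) ->
  Ytil mu W zeta_u psi_u zeta_t psi_t =
    zeta_t * (sin (psi_t - pi / mu%:R
                   + 2 * pi / mu%:R * (Num.ceil ((3 / 4 - psi_u / (2 * pi)) * mu%:R))%:~R)) ^+ 2
    / (sin (pi / mu%:R) / W%:R) ^+ 2.
Proof.
move=> hW hmu hev hzu /andP[hpu0 hpu1] hzt hnz.
set n := mu./2.
have Hmu : mu = (n.*2)%N by rewrite -[LHS]odd_double_half (negbTE hev).
have hn : (1 <= n)%N by move: hmu; rewrite Hmu -muln2; lia.
have hnR : 0 < n%:R :> R by rewrite ltr0n.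
have hpi := @pi_gt0 R.
have HmuR : mu%:R = 2 * n%:R :> R by rewrite Hmu -mul2n natrM.
pose d : R := pi / n%:R.
have hd : 0 < d by rewrite divr_gt0.
have hnd : n%:R * d = pi by rewrite /d mulrC divfK // gt_eqF.
have hmud : mu%:R * d = pi *+ 2 by rewrite HmuR -mulrA hnd mulr2n; ring.
have hn1 : (1 <= n%:R :> R) by rewrite ler1n.
have hdpi : d <= pi by nra.
set x := (3 / 4 - psi_u / (2 * pi)) * mu%:R.
set c := Num.ceil x.
set C : R := c%:~R.
have [hC2 hC1] : C - 1 < x /\ x < C.
  have /andP[h1 h2] := ceil_itv x.
  split; first by move: h1; rewrite intrD.
  rewrite lt_neqAle h2 andbT; exact: hnz.
have hxd : x * d = 3 * pi / 2 - psi_u.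
  by rewrite /x /d HmuR aux_xd // gt_eqF.
have hz1 : 3 * pi / 2 - psi_u < C * d by rewrite -hxd ltr_pM2r.
have hz2 : C * d < 3 * pi / 2 - psi_u + d.
  have : (C - 1) * d < x * d by rewrite ltr_pM2r.
  rewrite hxd; lra.
have hq : psi_u / (2 * pi) < 1 by rewrite ltr_pdivrMr ?mul1r // mulr_gt0.
have hmuR : 0 < mu%:R :> R by rewrite HmuR mulr_gt0.
have hxmu : - mu%:R < x.
  have h7 : 0 < (1 + (3 / 4 - psi_u / (2 * pi))) * mu%:R.
    by apply: mulr_gt0 => //; lra.
  rewrite /x -subr_gt0; move: h7; rewrite mulrDl mul1r opprK addrC //.
have hcmu : (0 <= c + mu%:Z)%R.
  have : ((- (mu%:Z))%:~R < c%:~R :> R).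
    by rewrite mulrNz; exact: lt_trans hxmu hC1.
  rewrite ltr_int => h.
  by rewrite -(opprK (mu%:Z)) subr_ge0 ltW.
pose a := absz (c + mu%:Z).
have ha : a%:R = C + mu%:R :> R.
  have -> : a%:R = (a%:Z)%:~R :> R by [].
  by rewrite /a gez0_abs // intrD.
have hsgn : forall i, (i < n.*2)%N ->
    (0 < cos (psi_u + (i + a)%:R * d)) = (i < n)%N.
  move=> i hi.
  pose z0 := psi_u + C * d - pi *+ 2.
  have hz0a : -(pi / 2) < z0 by rewrite /z0 -mulr_natl; lra.
  have hz0b : z0 < -(pi / 2) + d by rewrite /z0 -mulr_natl; lra.
  have E : psi_u + (i + a)%:R * d = (z0 + i%:R * d) + pi *+ 2 + pi *+ 2.
    by rewrite natrD ha !mulrDl hmud /z0; ring.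
  rewrite E !cosD2pi.
  have hid : 0 <= i%:R * d by rewrite mulr_ge0 // ltW.
  have hi2 : (i.+1)%:R * d <= pi *+ 2.
    by rewrite -hmud ler_pM2r // ler_nat Hmu.
  rewrite -addn1 natrD mulrDl mul1r in hi2.
  case: (ltnP i n) => hin.
    apply: cos_gt0_pihalf.
    have : (i.+1)%:R * d <= n%:R * d by rewrite ler_pM2r // ler_nat.
    rewrite -addn1 natrD mulrDl mul1r hnd => h1.
    apply/andP; split; lra.
  apply/negbTE; rewrite -leNgt.
  have := cosDpi (z0 + i%:R * d - pi); rewrite subrK => ->.
  rewrite oppr_le0 ltW //; apply: cos_gt0_pihalf.
  have : n%:R * d <= i%:R * d by rewrite ler_pM2r // ler_nat.
  rewrite hnd => h1.
  move: hi2; rewrite -mulr_natl => hi2.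
  apply/andP; split; lra.
pose h := fun m : nat => if 0 < cos (psi_u + m%:R * d)
  then Num.sqrt zeta_t * cos (psi_t + m%:R * d) else 0.
have hper : forall m, h (m + mu)%N = h m.
  by move=> m; rewrite /h natrD mulrDl hmud (addrA psi_u) (addrA psi_t) !cosD2pi.
have hn0 : n%:R != 0 :> R by rewrite gt_eqF.
have S1 : \sum_(0 <= k < (Kdim mu W).+1 | inK1 mu W zeta_u psi_u k)
    Reh mu zeta_t psi_t k = \sum_(0 <= i < mu * W) h (i + 1)%N.
  rewrite big_ltn_cond //.
  have -> : inK1 mu W zeta_u psi_u 0 = false by [].
  rewrite big_ltn_cond; last by rewrite /Kdim addn1.
  have -> : inK1 mu W zeta_u psi_u 1 = false by [].
  rewrite big_mkcond (big_addn 0 _ 2).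
  have -> : ((Kdim mu W).+1 - 2 = mu * W)%N.
    by rewrite /Kdim addn1 subn2.
  apply: eq_big_nat => i /andP[_ hi].
  rewrite /inK1.
  have -> : (2 <= i + 2 <= Kdim mu W)%N.
    by rewrite /Kdim leq_addl /= addn1 addn2 ltnS.
  rewrite /Reh /h addn2 addn1 andTb.
  rewrite [(i.+2).-1]/= HmuR !aux_ang // -/d.
  by rewrite pmulr_rgt0 // sqrtr_gt0.
pose phi := psi_t + a%:R * d.
have S3 : \sum_(0 <= i < mu) h i =
    Num.sqrt zeta_t * \sum_(0 <= j < n) cos (phi + j%:R * d).
  rewrite -(@shift_sum R h mu hper a).
  have hmun : mu = (n + n)%N by rewrite Hmu addnn.
  rewrite {1}hmun (big_cat_nat _ (n:=n)) //=; last by rewrite leq_addr.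
  rewrite [X in _ + X = _]big_nat_cond [X in _ + X = _]big1 ?addr0; last first.
    move=> i /andP[/andP[h1 h2] _]; rewrite /h hsgn; last by rewrite -addnn.
    by rewrite ltnNge h1.
  rewrite mulr_sumr; apply: eq_big_nat => i /andP[_ hi].
  rewrite /h hsgn; last by rewrite -addnn ltn_addr.
  by rewrite hi /phi natrD mulrDl addrAC -addrA.
have hsd : 0 < sin (d / 2).
  apply: sin_gt0_pi; apply/andP; split; first by rewrite divr_gt0.
  lra.
set s := sin (psi_t - d / 2 + d * C).
have hT : 2 * sin (d / 2) * \sum_(0 <= j < n) cos (phi + j%:R * d) = - 2 * s.
  rewrite telescope hnd.
  have -> : phi + pi - d / 2 = (phi - d / 2) + pi by ring.
  rewrite sinDpi.
  have -> : phi - d / 2 = (psi_t - d / 2 + d * C) + pi *+ 2.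
    by rewrite /phi ha mulrDl hmud; ring.
  by rewrite sinD2pi -/s; ring.
have hT' : \sum_(0 <= j < n) cos (phi + j%:R * d) = - s / sin (d / 2).
  apply: (mulfI (_ : 2 * sin (d / 2) != 0)); first by rewrite gt_eqF // mulr_gt0.
  rewrite hT; field; by rewrite gt_eqF.
rewrite /Ytil S1 block_sum // S3 hT'.
have -> : pi / mu%:R = d / 2 by rewrite HmuR aux_half.
have -> : 2 * pi / mu%:R = d by rewrite HmuR aux_two.
rewrite -/s !exprMn sqr_sqrtr ?ltW //.
have hW0 : W%:R != 0 :> R by rewrite pnatr_eq0 -lt0n.
field; by rewrite hW0 gt_eqF.
Qed.
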